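(* Let $\mathfrak{n}$ be the real $7$-dimensional Lie algebra with basis $e_1,\dots,e_7$ whose nonzero brackets (up to antisymmetry) are $[e_1,e_2]=e_4$, $[e_1,e_4]=e_5$, $[e_1,e_5]=e_6$, $[e_1,e_6]=e_7$, $[e_2,e_3]=e_6$, $[e_2,e_4]=e_6$, $[e_2,e_5]=e_7$, $[e_3,e_4]=-e_7$. Then $\mathfrak{n}$ is an Einstein nilradical.
   Context: A real nilpotent Lie algebra $\mathfrak{n}$ is called an Einstein nilradical if it admits an inner product such that the left-invariant Riemannian metric it defines on the simply connected nilpotent Lie group with Lie algebra $\mathfrak{n}$ is a nilsoliton, i.e. its Ricci operator satisfies $\mathrm{Ric}=c\,\mathrm{Id}+D$ for some $c\in\mathbb{R}$ and some derivation $D$ of $\mathfrak{n}$. Brackets of basis elements not listed are zero. *)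

(* Defs.v *)
From HB Require Import structures.
From mathcomp Require Import all_boot all_order all_algebra.
From mathcomp Require Import reals.
Set Implicit Arguments. Unset Strict Implicit. Unset Printing Implicit Defensive.
Import Order.TTheory GRing.Theory Num.Theory.
Local Open Scope ring_scope.

Section LieDefs.
Variables (R : realType) (n : nat).

Definition lbr (c : 'I_n -> 'I_n -> 'rV[R]_n) (u v : 'rV[R]_n) : 'rV[R]_n :=
  \sum_(i < n) \sum_(j < n) (u 0 i * v 0 j) *: c i j.

Definition ebase (k : 'I_n) : 'rV[R]_n := delta_mx 0 k.

Definition lie_nilpotent (c : 'I_n -> 'I_n -> 'rV[R]_n) : Prop :=
  exists k : nat, forall (xs : k.-tuple 'rV[R]_n) (y : 'rV[R]_n),
    foldr (fun x acc => lbr c x acc) y xs = 0.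

Definition inner_product (G : 'M[R]_n) : Prop :=
  G^T = G /\ forall v : 'rV[R]_n, v != 0 -> 0 < (v *m G *m v^T) 0 0.

Definition ip (G : 'M[R]_n) (u v : 'rV[R]_n) : R := (u *m G *m v^T) 0 0.

(* Levi-Civita connection of the left-invariant metric on left-invariant
   fields, via the Koszul formula
   2 <nabla_X Y, Z> = <[X,Y],Z> - <[Y,Z],X> + <[Z,X],Y>. *)
Definition nabla c G (X Y : 'rV[R]_n) : 'rV[R]_n :=
  (2%:R^-1 *: \row_(k < n) (ip G (lbr c X Y) (ebase k)
                            - ip G (lbr c Y (ebase k)) X
                            + ip G (lbr c (ebase k) X) Y)) *m invmx G.

Definition curv c G (X Y Z : 'rV[R]_n) : 'rV[R]_n :=
  nabla c G X (nabla c G Y Z) - nabla c G Y (nabla c G X Z)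
  - nabla c G (lbr c X Y) Z.

(* Ricci tensor ric(X,Y) = tr (Z |-> R(Z,X)Y) *)
Definition ric c G (X Y : 'rV[R]_n) : R :=
  \sum_(k < n) (curv c G (ebase k) X Y) 0 k.

(* Ricci operator: <Ric X, Y> = ric(X,Y) *)
Definition ricop c G (X : 'rV[R]_n) : 'rV[R]_n :=
  (\row_(k < n) ric c G X (ebase k)) *m invmx G.

Definition is_derivation c (D : 'M[R]_n) : Prop :=
  forall X Y : 'rV[R]_n, lbr c X Y *m D = lbr c (X *m D) Y + lbr c X (Y *m D).

Definition nilsoliton c G : Prop :=
  exists (cc : R) (D : 'M[R]_n), is_derivation c D /\
    forall X : 'rV[R]_n, ricop c G X = cc *: X + X *m D.

Definition einstein_nilradical c : Prop :=
  lie_nilpotent c /\ exists G : 'M[R]_n, inner_product G /\ nilsoliton c G.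

End LieDefs.

(* The 7-dimensional algebra; index k stands for e_(k+1). Brackets for i<j. *)
Definition n7_upper (R : realType) (i j : nat) : 'rV[R]_7 :=
  match i, j with
  | 0, 1 => @ebase R 7 (inord 3)
  | 0, 3 => @ebase R 7 (inord 4)
  | 0, 4 => @ebase R 7 (inord 5)
  | 0, 5 => @ebase R 7 (inord 6)
  | 1, 2 => @ebase R 7 (inord 5)
  | 1, 3 => @ebase R 7 (inord 5)
  | 1, 4 => @ebase R 7 (inord 6)
  | 2, 3 => - @ebase R 7 (inord 6)
  | _, _ => 0
  end.

Definition n7 (R : realType) (i j : 'I_7) : 'rV[R]_7 :=
  if (i < j)%N then n7_upper R i j
  else if (j < i)%N then - n7_upper R j i else 0.

(* Main.v *)
Require Import Defs.
From HB Require Import structures.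
From mathcomp Require Import all_boot all_order all_algebra.
From mathcomp Require Import reals.
From mathcomp Require Import ring lra.
Set Implicit Arguments. Unset Strict Implicit. Unset Printing Implicit Defensive.
Import Order.TTheory GRing.Theory Num.Theory.
Local Open Scope ring_scope.
Section Gen.
Variables (R : realType) (n : nat).
Implicit Types (c : 'I_n -> 'I_n -> 'rV[R]_n) (G : 'M[R]_n) (u v w X Y Z : 'rV[R]_n).

Lemma lbrE c u v k : (lbr c u v) 0 k = \sum_(i < n) \sum_(j < n) u 0 i * v 0 j * c i j 0 k.
Proof. by rewrite /lbr summxE; apply eq_bigr => i _; rewrite summxE; apply eq_bigr => j _; rewrite mxE. Qed.

Lemma lbr_lin1 c a u v w : lbr c (a *: u + v) w = a *: lbr c u w + lbr c v w.
Proof.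
apply/rowP => k; rewrite !mxE !lbrE mulr_sumr -big_split; apply eq_bigr => i _.
rewrite mulr_sumr -big_split; apply eq_bigr => j _; rewrite !mxE /=; ring.
Qed.

Lemma lbr_lin2 c a u v w : lbr c w (a *: u + v) = a *: lbr c w u + lbr c w v.
Proof.
apply/rowP => k; rewrite !mxE !lbrE mulr_sumr -big_split; apply eq_bigr => i _.
rewrite mulr_sumr -big_split; apply eq_bigr => j _; rewrite !mxE /=; ring.
Qed.

Lemma ip_lin1 G a u v w : ip G (a *: u + v) w = a * ip G u w + ip G v w.
Proof. by rewrite /ip !mulmxDl -!scalemxAl !mxE. Qed.

Lemma ip_lin2 G a u v w : ip G w (a *: u + v) = a * ip G w u + ip G w v.
Proof. by rewrite /ip linearD linearZ /= mulmxDr -!scalemxAr !mxE. Qed.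

Definition kos c G X Y : 'rV[R]_n := \row_(k < n) (ip G (lbr c X Y) (@ebase R n k)
                            - ip G (lbr c Y (@ebase R n k)) X
                            + ip G (lbr c (@ebase R n k) X) Y).

Lemma nablaE c G X Y : nabla c G X Y = (2%:R^-1 *: kos c G X Y) *m invmx G.
Proof. by []. Qed.

Lemma comb_lin (M : 'M[R]_n) a (K1 K2 : 'rV[R]_n) :
  (2%:R^-1 *: (a *: K1 + K2)) *m M = a *: ((2%:R^-1 *: K1) *m M) + (2%:R^-1 *: K2) *m M.
Proof. by rewrite scalerDr mulmxDl !scalerA mulrC -scalerA scalemxAl. Qed.

Lemma kos_lin1 c G a X1 X2 Y : kos c G (a *: X1 + X2) Y = a *: kos c G X1 Y + kos c G X2 Y.
Proof.
apply/rowP => k; rewrite !mxE lbr_lin1 ip_lin1 ip_lin2 lbr_lin2 ip_lin1 /=; ring.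
Qed.

Lemma kos_lin2 c G a Y1 Y2 X : kos c G X (a *: Y1 + Y2) = a *: kos c G X Y1 + kos c G X Y2.
Proof.
apply/rowP => k; rewrite !mxE lbr_lin2 ip_lin1 lbr_lin1 ip_lin1 ip_lin2 /=; ring.
Qed.

Lemma nabla_lin1 c G a X1 X2 Y : nabla c G (a *: X1 + X2) Y = a *: nabla c G X1 Y + nabla c G X2 Y.
Proof. by rewrite !nablaE kos_lin1 comb_lin. Qed.

Lemma nabla_lin2 c G a Y1 Y2 X : nabla c G X (a *: Y1 + Y2) = a *: nabla c G X Y1 + nabla c G X Y2.
Proof. by rewrite !nablaE kos_lin2 comb_lin. Qed.

Lemma curv_lin2 c G a X1 X2 Y Z :
  curv c G Z (a *: X1 + X2) Y = a *: curv c G Z X1 Y + curv c G Z X2 Y.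
Proof.
rewrite /curv !(nabla_lin1, nabla_lin2, lbr_lin2).
move: (nabla c G) => N.
apply/rowP => i; rewrite !mxE /=; ring.
Qed.

Lemma lin_sum (f : 'rV[R]_n -> 'rV[R]_n) :
  (forall a u v, f (a *: u + v) = a *: f u + f v) ->
  forall (y : 'I_n -> R), f (\sum_(l < n) y l *: (@ebase R n l)) = \sum_(l < n) y l *: f ((@ebase R n l)).
Proof.
move=> Hf y.
have f0 : f 0 = 0.
  have h := Hf 1 0 0; rewrite !scale1r addr0 in h.
  by apply: (@addrI _ (f 0)); rewrite addr0 -h.
elim/big_rec2: _ => // i u1 u2 _ <-; by rewrite Hf.
Qed.

Lemma row_decomp (X : 'rV[R]_n) : X = \sum_(l < n) X 0 l *: @ebase R n l.
Proof. exact: row_sum_delta. Qed.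
Local Notation e := (@ebase R n).

Lemma ebaseE (i j : 'I_n) : e i 0 j = (i == j)%:R.
Proof. by rewrite /ebase mxE eqxx eq_sym. Qed.

Lemma lbr_ee c i j : lbr c (e i) (e j) = c i j.
Proof.
apply/rowP => k; rewrite lbrE (bigD1 i) //= [X in _ + X]big1 ?addr0; last first.
  by move=> i' ne; apply: big1 => j' _; rewrite ebaseE eq_sym (negbTE ne) !mul0r.
rewrite (bigD1 j) //= [X in _ + X]big1 ?addr0; last first.
  by move=> j' ne; rewrite !ebaseE eq_sym (negbTE ne) mulr0 mul0r.
by rewrite !ebaseE !eqxx !mul1r.
Qed.

Lemma ip_e G u k : ip G u (e k) = \sum_(j < n) u 0 j * G j k.
Proof.
rewrite /ip mxE (bigD1 k) //= [X in _ + X]big1 ?addr0; last first.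
  by move=> l ne; rewrite [_^T _ _]mxE ebaseE eq_sym (negbTE ne) mulr0.
by rewrite [_^T _ _]mxE ebaseE eqxx mulr1 mxE.
Qed.

Lemma nabla_ee c G a b l : (nabla c G (e a) (e b)) 0 l =
  \sum_(k < n) 2%:R^-1 * (\sum_(j < n) c a b 0 j * G j k - \sum_(j < n) c b k 0 j * G j a
      + \sum_(j < n) c k a 0 j * G j b) * invmx G k l.
Proof.
rewrite nablaE mxE; apply eq_bigr => k _; rewrite !mxE !lbr_ee !ip_e //.
Qed.

Lemma nabla_dec2 c G X V : nabla c G X V = \sum_(l < n) V 0 l *: nabla c G X (e l).
Proof.
rewrite {1}(row_decomp V).
exact: (@lin_sum (fun V => nabla c G X V) (fun a u v => nabla_lin2 c G a u v X) (fun l => V 0 l)).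
Qed.

Lemma nabla_dec1 c G V Y : nabla c G V Y = \sum_(l < n) V 0 l *: nabla c G (e l) Y.
Proof.
rewrite {1}(row_decomp V).
exact: (@lin_sum (fun V => nabla c G V Y) (fun a u v => nabla_lin1 c G a u v Y) (fun l => V 0 l)).
Qed.

Lemma ric_ee c G a b : ric c G (e a) (e b) =
  \sum_(m < n) \sum_(l < n) ((nabla c G (e a) (e b)) 0 l * (nabla c G (e m) (e l)) 0 m
    - (nabla c G (e m) (e b)) 0 l * (nabla c G (e a) (e l)) 0 m
    - c m a 0 l * (nabla c G (e l) (e b)) 0 m).
Proof.
rewrite /ric; apply eq_bigr => m _.
rewrite /curv lbr_ee (nabla_dec2 c G (e m) (nabla c G (e a) (e b))).
rewrite (nabla_dec2 c G (e a) (nabla c G (e m) (e b))) (nabla_dec1 c G (c m a) (e b)).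
move: (nabla c G) => N.
rewrite !mxE !summxE -!sumrB; apply eq_bigr => l _; rewrite !mxE //.
Qed.

Lemma ric_lin1 c G a X1 X2 Y : ric c G (a *: X1 + X2) Y = a * ric c G X1 Y + ric c G X2 Y.
Proof.
rewrite /ric mulr_sumr -big_split; apply eq_bigr => m _.
by rewrite curv_lin2; move: (curv c G) => N; rewrite !mxE.
Qed.

Lemma ricop_lin c G a X1 X2 : ricop c G (a *: X1 + X2) = a *: ricop c G X1 + ricop c G X2.
Proof.
rewrite /ricop scalemxAl -mulmxDl; congr (_ *m _).
by apply/rowP => k; rewrite !mxE ric_lin1.
Qed.

Lemma ricop_dec c G X : ricop c G X = \sum_(l < n) X 0 l *: ricop c G (e l).
Proof.
rewrite {1}(row_decomp X).
exact: (@lin_sum (fun V => ricop c G V) (fun a u v => ricop_lin c G a u v) (fun l => X 0 l)).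
Qed.

Lemma deriv_diag c (d : 'I_n -> R) :
  (forall i j k, c i j 0 k = 0 \/ d k = d i + d j) -> is_derivation c (diag_mx (\row_k d k)).
Proof.
move=> Hw X Y; apply/rowP => k; rewrite !mul_mx_diag !mxE !lbrE.
rewrite mulr_suml -big_split; apply eq_bigr => i _.
rewrite mulr_suml -big_split; apply eq_bigr => j _; rewrite /= !mxE.
by case: (Hw i j k) => ->; ring.
Qed.

Lemma nilp_step c (w : 'I_n -> nat) m x v :
  (forall i j k, c i j 0 k = 0 \/ w k = (w i + w j)%N) -> (forall k, 0 < w k)%N ->
  (forall k, (w k < m)%N -> v 0 k = 0) ->
  (forall k, (w k < m.+1)%N -> (lbr c x v) 0 k = 0).
Proof.
move=> Hw Hp Hv k Hk; rewrite lbrE; apply: big1 => i _; apply: big1 => j _.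
case: (Hw i j k) => [->|Hk']; first by rewrite mulr0.
rewrite Hv ?mulr0 ?mul0r //.
have := Hp i; move: Hk; rewrite Hk'; move: (w i) (w j) => a b; rewrite ltnS => H1 H2.
by apply: (leq_trans _ H1); rewrite addnC -addn1 leq_add2l.
Qed.

Lemma nilp_weight c (w : 'I_n -> nat) N :
  (forall k, 0 < w k)%N -> (forall k, w k <= N)%N ->
  (forall i j k, c i j 0 k = 0 \/ w k = (w i + w j)%N) -> lie_nilpotent c.
Proof.
move=> Hp HN Hw; exists N => xs y.
have H : forall (s : seq 'rV[R]_n) k, (w k < (size s).+1)%N ->
    (foldr (fun x acc => lbr c x acc) y s) 0 k = 0.
  elim=> [|x s IH] k /=; first by rewrite ltnS leqNgt Hp.
  move=> Hk; exact: (@nilp_step c w (size s).+1 x _ Hw Hp IH k Hk).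
apply/rowP => k; rewrite mxE; apply: H; rewrite size_tuple ltnS; exact: HN.
Qed.
End Gen.

Section Gen7.
Variable R : realType.
Local Notation e := (@ebase R 7).
Implicit Types (c : 'I_7 -> 'I_7 -> 'rV[R]_7) (G : 'M[R]_7).

Definition sum7 (F : nat -> R) := F 0%N + F 1%N + F 2%N + F 3%N + F 4%N + F 5%N + F 6%N.

Lemma big7 (F : nat -> R) : \sum_(k < 7) F k = sum7 F.
Proof. by rewrite /sum7 !big_ord_recl big_ord0 addr0 /= !addrA. Qed.

Lemma eq_sum7 (F1 F2 : nat -> R) : (forall k, (k < 7)%N -> F1 k = F2 k) -> sum7 F1 = sum7 F2.
Proof. by move=> H; rewrite /sum7 !H. Qed.

Definition EFg (C : nat -> nat -> nat -> R) (g : nat -> nat -> R) (a b k : nat) : R :=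
  sum7 (fun j => C a b j * g j k) - sum7 (fun j => C b k j * g j a) + sum7 (fun j => C k a j * g j b).

Lemma nabla_ee7 c (C : nat -> nat -> nat -> R) (g gi : nat -> nat -> R) G :
  (forall i j k : 'I_7, c i j 0 k = C i j k) -> (forall i j : 'I_7, G i j = g i j) ->
  (forall i j : 'I_7, invmx G i j = gi i j) -> forall a b l : 'I_7,
  (nabla c G (e a) (e b)) 0 l = sum7 (fun k => 2^-1 * EFg C g a b k * gi k l).
Proof.
move=> Hc HG HGi a b l; rewrite nabla_ee -big7; apply eq_bigr => k _.
rewrite HGi /EFg -!big7.
by congr (_ * (_ - _ + _) * _); apply eq_bigr => j _; rewrite Hc HG.
Qed.

Lemma ric_ee7 c (C : nat -> nat -> nat -> R) G (Gam : nat -> nat -> nat -> R) :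
  (forall i j k : 'I_7, c i j 0 k = C i j k) ->
  (forall a b l : 'I_7, (nabla c G (e a) (e b)) 0 l = Gam a b l) -> forall a b : 'I_7,
  ric c G (e a) (e b) = sum7 (fun m => sum7 (fun l =>
     Gam a b l * Gam m l m - Gam m b l * Gam a l m - C m a l * Gam l b m)).
Proof.
move=> Hc HGam a b; rewrite ric_ee -big7; apply eq_bigr => m _.
by rewrite -big7; apply eq_bigr => l _; rewrite !HGam Hc.
Qed.

Lemma mul_id7 (f g : nat -> nat -> R) :
  (forall i j, (i < 7)%N -> (j < 7)%N -> sum7 (fun k => f i k * g k j) = (i == j)%:R) ->
  (\matrix_(i, j) f i j : 'M[R]_7) *m (\matrix_(i, j) g i j) = 1%:M.
Proof.
move=> H; apply/matrixP => i j; rewrite !mxE.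
rewrite (eq_bigr (fun k : 'I_7 => f i k * g k j)) => [|k _]; last by rewrite !mxE.
by rewrite (big7 (fun k => f i k * g k j)) H.
Qed.

Lemma sym7 (g : nat -> nat -> R) :
  (forall i j, (i < 7)%N -> (j < 7)%N -> g i j = g j i) ->
  (\matrix_(i, j) g i j : 'M[R]_7)^T = \matrix_(i, j) g i j.
Proof. by move=> H; apply/matrixP => i j; rewrite !mxE H. Qed.

Lemma quad7 (g : nat -> nat -> R) (v : 'rV[R]_7) :
  (v *m (\matrix_(i, j) g i j) *m v^T) 0 0 =
  sum7 (fun j => sum7 (fun i => v 0 (inord i) * g i j * v 0 (inord j))).
Proof.
rewrite mxE -big7; apply eq_bigr => j _; rewrite mxE [v^T _ _]mxE mulr_suml -big7.
by apply eq_bigr => i _; rewrite mxE !inord_val.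
Qed.

Lemma ebase_mul (M : 'M[R]_7) a k : (e a *m M) 0 k = M a k.
Proof. by rewrite -rowE mxE. Qed.

Lemma ricop_e7 c G Gi (mt : nat -> R) :
  G *m Gi = 1%:M -> invmx G = Gi ->
  (forall a b : 'I_7, ric c G (e a) (e b) = mt a * G a b) ->
  forall a : 'I_7, ricop c G (e a) = mt a *: e a.
Proof.
move=> GGi HGi HR a; rewrite /ricop HGi.
have -> : \row_k ric c G (e a) (e k) = mt a *: (e a *m G).
  by apply/rowP => k; rewrite mxE HR [RHS]mxE ebase_mul.
by rewrite -scalemxAl -mulmxA GGi mulmx1.
Qed.

Lemma invmx_eq G Gi : G *m Gi = 1%:M -> invmx G = Gi.
Proof.
move=> H; have [uG _] := mulmx1_unit H.
by rewrite -[RHS](mulKmx uG) H mulmx1.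
Qed.

Lemma final7 (mt dt : nat -> R) (cc : R) (X : 'rV[R]_7) :
  (forall k, (k < 7)%N -> mt k = cc + dt k) ->
  \sum_(l < 7) X 0 l *: (mt l *: e l) = cc *: X + X *m diag_mx (\row_k dt k).
Proof.
move=> H; apply/rowP => k; rewrite summxE (bigD1 k) //= [X in _ + X]big1 ?addr0; last first.
  by move=> l ne; rewrite mxE [(_ *: e l) _ _]mxE ebaseE (negbTE ne) !mulr0.
rewrite mxE [(_ *: e k) _ _]mxE ebaseE eqxx mulr1 mul_mx_diag !mxE (H k (ltn_ord k)).
ring.
Qed.
End Gen7.

Section Conc.
Variable R : realType.
Local Notation e := (@ebase R 7).
Definition Ct (i j k : nat) : R :=
  match i, j, k with
  | 0, 1, 3 => 1 | 1, 0, 3 => -1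
  | 0, 3, 4 => 1 | 3, 0, 4 => -1
  | 0, 4, 5 => 1 | 4, 0, 5 => -1
  | 0, 5, 6 => 1 | 5, 0, 6 => -1
  | 1, 2, 5 => 1 | 2, 1, 5 => -1
  | 1, 3, 5 => 1 | 3, 1, 5 => -1
  | 1, 4, 6 => 1 | 4, 1, 6 => -1
  | 2, 3, 6 => -1 | 3, 2, 6 => 1
  | _, _, _ => 0
  end.

Definition Gt (i j : nat) : R :=
  match i, j with
  | 0, 0 => (1)
  | 1, 1 => (1)
  | 2, 2 => (100 / 133)
  | 2, 3 => (50 / 133)
  | 3, 2 => (50 / 133)
  | 3, 3 => (120 / 133)
  | 4, 4 => (100 / 133)
  | 5, 5 => ((125 * 4) / (133 * 7))
  | 6, 6 => ((55 * 125) / (19 * 133 * 7))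
  | _, _ => 0
  end.
Definition Git (i j : nat) : R :=
  match i, j with
  | 0, 0 => (1)
  | 1, 1 => (1)
  | 2, 2 => (42 / 25)
  | 2, 3 => - (7 / 10)
  | 3, 2 => - (7 / 10)
  | 3, 3 => (7 / 5)
  | 4, 4 => (133 / 100)
  | 5, 5 => ((133 * 7) / (125 * 4))
  | 6, 6 => ((19 * 133 * 7) / (55 * 125))
  | _, _ => 0
  end.
Definition EtL : seq (seq (seq R)) := [::
  [:: [:: 0; 0; 0; 0; 0; 0; 0];
     [:: 0; 0; (50 / 133); (120 / 133); 0; 0; 0];
     [:: 0; - (50 / 133); 0; 0; 0; 0; 0];
     [:: 0; - (120 / 133); 0; 0; (100 / 133); 0; 0];
     [:: 0; 0; 0; - (100 / 133); 0; ((125 * 4) / (133 * 7)); 0];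
     [:: 0; 0; 0; 0; - ((125 * 4) / (133 * 7)); 0; ((55 * 125) / (19 * 133 * 7))];
     [:: 0; 0; 0; 0; 0; - ((55 * 125) / (19 * 133 * 7)); 0]];
  [:: [:: 0; 0; - (50 / 133); - (120 / 133); 0; 0; 0];
     [:: 0; 0; 0; 0; 0; 0; 0];
     [:: (50 / 133); 0; 0; 0; 0; ((125 * 4) / (133 * 7)); 0];
     [:: (120 / 133); 0; 0; 0; 0; ((125 * 4) / (133 * 7)); 0];
     [:: 0; 0; 0; 0; 0; 0; ((55 * 125) / (19 * 133 * 7))];
     [:: 0; 0; - ((125 * 4) / (133 * 7)); - ((125 * 4) / (133 * 7)); 0; 0; 0];
     [:: 0; 0; 0; 0; - ((55 * 125) / (19 * 133 * 7)); 0; 0]];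
  [:: [:: 0; - (50 / 133); 0; 0; 0; 0; 0];
     [:: (50 / 133); 0; 0; 0; 0; - ((125 * 4) / (133 * 7)); 0];
     [:: 0; 0; 0; 0; 0; 0; 0];
     [:: 0; 0; 0; 0; 0; 0; - ((55 * 125) / (19 * 133 * 7))];
     [:: 0; 0; 0; 0; 0; 0; 0];
     [:: 0; ((125 * 4) / (133 * 7)); 0; 0; 0; 0; 0];
     [:: 0; 0; 0; ((55 * 125) / (19 * 133 * 7)); 0; 0; 0]];
  [:: [:: 0; - (120 / 133); 0; 0; - (100 / 133); 0; 0];
     [:: (120 / 133); 0; 0; 0; 0; - ((125 * 4) / (133 * 7)); 0];
     [:: 0; 0; 0; 0; 0; 0; ((55 * 125) / (19 * 133 * 7))];
     [:: 0; 0; 0; 0; 0; 0; 0];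
     [:: (100 / 133); 0; 0; 0; 0; 0; 0];
     [:: 0; ((125 * 4) / (133 * 7)); 0; 0; 0; 0; 0];
     [:: 0; 0; - ((55 * 125) / (19 * 133 * 7)); 0; 0; 0; 0]];
  [:: [:: 0; 0; 0; - (100 / 133); 0; - ((125 * 4) / (133 * 7)); 0];
     [:: 0; 0; 0; 0; 0; 0; - ((55 * 125) / (19 * 133 * 7))];
     [:: 0; 0; 0; 0; 0; 0; 0];
     [:: (100 / 133); 0; 0; 0; 0; 0; 0];
     [:: 0; 0; 0; 0; 0; 0; 0];
     [:: ((125 * 4) / (133 * 7)); 0; 0; 0; 0; 0; 0];
     [:: 0; ((55 * 125) / (19 * 133 * 7)); 0; 0; 0; 0; 0]];
  [:: [:: 0; 0; 0; 0; - ((125 * 4) / (133 * 7)); 0; - ((55 * 125) / (19 * 133 * 7))];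
     [:: 0; 0; - ((125 * 4) / (133 * 7)); - ((125 * 4) / (133 * 7)); 0; 0; 0];
     [:: 0; ((125 * 4) / (133 * 7)); 0; 0; 0; 0; 0];
     [:: 0; ((125 * 4) / (133 * 7)); 0; 0; 0; 0; 0];
     [:: ((125 * 4) / (133 * 7)); 0; 0; 0; 0; 0; 0];
     [:: 0; 0; 0; 0; 0; 0; 0];
     [:: ((55 * 125) / (19 * 133 * 7)); 0; 0; 0; 0; 0; 0]];
  [:: [:: 0; 0; 0; 0; 0; - ((55 * 125) / (19 * 133 * 7)); 0];
     [:: 0; 0; 0; 0; - ((55 * 125) / (19 * 133 * 7)); 0; 0];
     [:: 0; 0; 0; ((55 * 125) / (19 * 133 * 7)); 0; 0; 0];
     [:: 0; 0; - ((55 * 125) / (19 * 133 * 7)); 0; 0; 0; 0];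
     [:: 0; ((55 * 125) / (19 * 133 * 7)); 0; 0; 0; 0; 0];
     [:: ((55 * 125) / (19 * 133 * 7)); 0; 0; 0; 0; 0; 0];
     [:: 0; 0; 0; 0; 0; 0; 0]]].
Definition Et (i j k : nat) : R := nth 0 (nth [::] (nth [::] EtL i) j) k.
Definition GamtL : seq (seq (seq R)) := [::
  [:: [:: 0; 0; 0; 0; 0; 0; 0];
     [:: 0; 0; 0; (1 / 2); 0; 0; 0];
     [:: 0; - (25 / 133); 0; 0; 0; 0; 0];
     [:: 0; - (60 / 133); 0; 0; (1 / 2); 0; 0];
     [:: 0; 0; (5 / 19); - (10 / 19); 0; (1 / 2); 0];
     [:: 0; 0; 0; 0; - (5 / 14); 0; (1 / 2)];
     [:: 0; 0; 0; 0; 0; - (55 / 152); 0]];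
  [:: [:: 0; 0; 0; - (1 / 2); 0; 0; 0];
     [:: 0; 0; 0; 0; 0; 0; 0];
     [:: (25 / 133); 0; 0; 0; 0; (1 / 2); 0];
     [:: (60 / 133); 0; 0; 0; 0; (1 / 2); 0];
     [:: 0; 0; 0; 0; 0; 0; (1 / 2)];
     [:: 0; 0; - (5 / 19); - (25 / 133); 0; 0; 0];
     [:: 0; 0; 0; 0; - ((55 * 5) / (133 * 8)); 0; 0]];
  [:: [:: 0; - (25 / 133); 0; 0; 0; 0; 0];
     [:: (25 / 133); 0; 0; 0; 0; - (1 / 2); 0];
     [:: 0; 0; 0; 0; 0; 0; 0];
     [:: 0; 0; 0; 0; 0; 0; - (1 / 2)];
     [:: 0; 0; 0; 0; 0; 0; 0];
     [:: 0; ((125 * 2) / (133 * 7)); 0; 0; 0; 0; 0];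
     [:: 0; 0; - ((55 * 25) / (19 * 133 * 4)); ((55 * 25) / (19 * 133 * 2)); 0; 0; 0]];
  [:: [:: 0; - (60 / 133); 0; 0; - (1 / 2); 0; 0];
     [:: (60 / 133); 0; 0; 0; 0; - (1 / 2); 0];
     [:: 0; 0; 0; 0; 0; 0; (1 / 2)];
     [:: 0; 0; 0; 0; 0; 0; 0];
     [:: (50 / 133); 0; 0; 0; 0; 0; 0];
     [:: 0; ((125 * 2) / (133 * 7)); 0; 0; 0; 0; 0];
     [:: 0; 0; - ((55 * 15) / (19 * 133)); ((55 * 25) / (19 * 133 * 4)); 0; 0; 0]];
  [:: [:: 0; 0; (5 / 19); - (10 / 19); 0; - (1 / 2); 0];
     [:: 0; 0; 0; 0; 0; 0; - (1 / 2)];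
     [:: 0; 0; 0; 0; 0; 0; 0];
     [:: (50 / 133); 0; 0; 0; 0; 0; 0];
     [:: 0; 0; 0; 0; 0; 0; 0];
     [:: ((125 * 2) / (133 * 7)); 0; 0; 0; 0; 0; 0];
     [:: 0; ((55 * 125) / (19 * 133 * 14)); 0; 0; 0; 0; 0]];
  [:: [:: 0; 0; 0; 0; - (5 / 14); 0; - (1 / 2)];
     [:: 0; 0; - (5 / 19); - (25 / 133); 0; 0; 0];
     [:: 0; ((125 * 2) / (133 * 7)); 0; 0; 0; 0; 0];
     [:: 0; ((125 * 2) / (133 * 7)); 0; 0; 0; 0; 0];
     [:: ((125 * 2) / (133 * 7)); 0; 0; 0; 0; 0; 0];
     [:: 0; 0; 0; 0; 0; 0; 0];
     [:: ((55 * 125) / (19 * 133 * 14)); 0; 0; 0; 0; 0; 0]];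
  [:: [:: 0; 0; 0; 0; 0; - (55 / 152); 0];
     [:: 0; 0; 0; 0; - ((55 * 5) / (133 * 8)); 0; 0];
     [:: 0; 0; - ((55 * 25) / (19 * 133 * 4)); ((55 * 25) / (19 * 133 * 2)); 0; 0; 0];
     [:: 0; 0; - ((55 * 15) / (19 * 133)); ((55 * 25) / (19 * 133 * 4)); 0; 0; 0];
     [:: 0; ((55 * 125) / (19 * 133 * 14)); 0; 0; 0; 0; 0];
     [:: ((55 * 125) / (19 * 133 * 14)); 0; 0; 0; 0; 0; 0];
     [:: 0; 0; 0; 0; 0; 0; 0]]].
Definition Gamt (i j k : nat) : R := nth 0 (nth [::] (nth [::] GamtL i) j) k.

Ltac c7 a Ha := case: a Ha => [|[|[|[|[|[|[|a]]]]]]] Ha //.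

Lemma Et_ok a b k : (a < 7)%N -> (b < 7)%N -> (k < 7)%N -> EFg Ct Gt a b k = Et a b k.
Proof.
move=> Ha Hb Hk; c7 a Ha; c7 b Hb; c7 k Hk.
all: cbv beta iota delta [EFg sum7 Ct Gt Et EtL nth].
all: by field.
Qed.

Lemma Gam_ok a b l : (a < 7)%N -> (b < 7)%N -> (l < 7)%N ->
  sum7 (fun k => 2^-1 * Et a b k * Git k l) = Gamt a b l.
Proof.
move=> Ha Hb Hl; c7 a Ha; c7 b Hb; c7 l Hl.
all: cbv beta iota delta [sum7 Et EtL Git Gamt GamtL nth].
all: by field.
Qed.

Definition mt (k : nat) : R :=
  match k with 0 => - (95 / 56) | 1 => - (65 / 56) | 2 => - (5 / 8) | 3 => - (5 / 8)
  | 4 => - (5 / 56) | 5 => 25 / 56 | _ => 55 / 56 end.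

Lemma Ric_ok a b : (a < 7)%N -> (b < 7)%N ->
  sum7 (fun m => sum7 (fun l =>
     Gamt a b l * Gamt m l m - Gamt m b l * Gamt a l m - Ct m a l * Gamt l b m)) = mt a * Gt a b.
Proof.
move=> Ha Hb; c7 a Ha; c7 b Hb.
all: cbv beta iota delta [sum7 Ct Gamt GamtL mt Gt nth].
all: by field.
Qed.
Lemma ebase_inord (m : nat) (k : 'I_7) : (m < 7)%N -> e (inord m) 0 k = (m == k)%:R.
Proof. by move=> Hm; rewrite ebaseE -val_eqE /= inordK. Qed.

Lemma Cval (i j k : 'I_7) : (n7 R i j) 0 k = Ct i j k.
Proof.
case: i => [[|[|[|[|[|[|[|i]]]]]]] Hi] //; case: j => [[|[|[|[|[|[|[|j]]]]]]] Hj] //;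
case: k => [[|[|[|[|[|[|[|k]]]]]]] Hk] //.
all: rewrite /n7 /=.
all: rewrite ?mxE ?ebase_inord //=.
all: by rewrite -?val_eqE /= ?inordK //= ?oppr0 ?opprK.
Qed.

Definition wt (k : nat) : nat := match k with 0 => 1 | 1 => 2 | 2 => 3 | 3 => 3 | 4 => 4 | 5 => 5 | _ => 6 end%N.

Lemma Cwt_nat i j k : (i < 7)%N -> (j < 7)%N -> (k < 7)%N -> Ct i j k = 0 \/ wt k = (wt i + wt j)%N.
Proof. move=> Hi Hj Hk; c7 i Hi; c7 j Hj; c7 k Hk. all: first [by left | by right]. Qed.

Definition Gm : 'M[R]_7 := \matrix_(i, j) Gt i j.
Definition Gim : 'M[R]_7 := \matrix_(i, j) Git i j.
Lemma GmE (i j : 'I_7) : Gm i j = Gt i j. Proof. by rewrite mxE. Qed.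
Lemma GimE (i j : 'I_7) : Gim i j = Git i j. Proof. by rewrite mxE. Qed.

Lemma GGi_nat i j : (i < 7)%N -> (j < 7)%N -> sum7 (fun k => Gt i k * Git k j) = (i == j)%:R.
Proof.
move=> Hi Hj; c7 i Hi; c7 j Hj.
all: cbv beta iota delta [sum7 Gt Git]; rewrite /=.
all: by field.
Qed.

Lemma GGi : Gm *m Gim = 1%:M.
Proof. exact: mul_id7 GGi_nat. Qed.

Lemma GinvE : invmx Gm = Gim.
Proof. exact: invmx_eq GGi. Qed.

Lemma GiE (i j : 'I_7) : invmx Gm i j = Git i j.
Proof. by rewrite GinvE GimE. Qed.

Lemma Gsym_nat i j : (i < 7)%N -> (j < 7)%N -> Gt i j = Gt j i.
Proof. move=> Hi Hj; c7 i Hi; c7 j Hj. all: by []. Qed.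

Lemma Gpos (v : 'rV[R]_7) : v != 0 -> 0 < (v *m Gm *m v^T) 0 0.
Proof.
move=> Hv; rewrite /Gm quad7.
have [k Hk] : exists k : 'I_7, v 0 k != 0.
  case/boolP: [exists k, v 0 k != 0] => [/existsP //|/existsPn H].
  case/eqP: Hv; apply/rowP => k; rewrite !mxE; apply/eqP; move: (H k); by rewrite negbK.
have Hx : v 0 (inord k) != 0 by rewrite inord_val.
have hk : 0 < v 0 (inord k) ^+ 2 by rewrite exprn_even_gt0 //= Hx orbT.
have h0 := sqr_ge0 (v 0 (inord 0)); have h1 := sqr_ge0 (v 0 (inord 1)).
have h2 := sqr_ge0 (v 0 (inord 2)); have h3 := sqr_ge0 (v 0 (inord 3)).
have h4 := sqr_ge0 (v 0 (inord 4)); have h5 := sqr_ge0 (v 0 (inord 5)).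
have h6 := sqr_ge0 (v 0 (inord 6)); have h23 := sqr_ge0 (v 0 (inord 2) + v 0 (inord 3)).
case: k Hk Hx hk => [m Hm] /= _ _; c7 m Hm.
all: move=> hk.
all: cbv beta iota delta [sum7 Gt].
all: lra.
Qed.

Lemma HGam (a b l : 'I_7) : (nabla (n7 R) Gm (e a) (e b)) 0 l = Gamt a b l.
Proof.
rewrite (@nabla_ee7 R (n7 R) Ct Gt Git Gm Cval GmE GiE a b l).
rewrite -(Gam_ok (ltn_ord a) (ltn_ord b) (ltn_ord l)); apply: eq_sum7 => k Hk.
by rewrite Et_ok.
Qed.

Lemma HRic (a b : 'I_7) : ric (n7 R) Gm (e a) (e b) = mt a * Gm a b.
Proof. by rewrite (@ric_ee7 R (n7 R) Ct Gm Gamt Cval HGam a b) Ric_ok ?ltn_ord // GmE. Qed.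

Definition dt (k : nat) : R := 15 / 28 * (wt k)%:R.

Lemma mt_ok k : (k < 7)%N -> mt k = - (125 / 56) + dt k.
Proof. move=> Hk; c7 k Hk. all: rewrite /mt /dt /=. all: by field. Qed.

End Conc.

Theorem mainTheorem9 (R : realType) : einstein_nilradical (n7 R).
Proof.
split.
  apply: (@nilp_weight R 7 (n7 R) (fun k => wt k) 6).
  - by case=> [[|[|[|[|[|[|[|m]]]]]]] Hm].
  - by case=> [[|[|[|[|[|[|[|m]]]]]]] Hm].
  - move=> i j k; rewrite Cval; apply: Cwt_nat; exact: ltn_ord.
exists (Gm R); split.
  split; last exact: Gpos.
  rewrite /Gm; exact: sym7 (@Gsym_nat R).
exists (- (125 / 56)), (diag_mx (\row_k dt R k)); split.
  apply: deriv_diag => i j k; rewrite Cval.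
  case: (Cwt_nat R (ltn_ord i) (ltn_ord j) (ltn_ord k)) => [->|H]; [by left | right].
  rewrite /dt H natrD; ring.
move=> X; rewrite ricop_dec.
rewrite (eq_bigr (fun l : 'I_7 => X 0 l *: (mt R l *: @ebase R 7 l))) => [|l _]; last first.
  by rewrite (ricop_e7 (GGi R) (GinvE R) (@HRic R)).
exact: final7 (@mt_ok R).
Qed.
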